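(* Suppose $g=1$ (so $f$ has degree $3$) and $\mathfrak{s}\subset\mathcal{R}$ is a cluster of cardinality $2$. Then $B_{f,\mathfrak{s}}=4v(2)$.
   Context: $K$ is a field of characteristic $0$, complete for a discrete valuation $v$ (values in $\mathbb{Q}\cup\{+\infty\}$) with algebraically closed residue field of characteristic $2$; $v$ extends to a fixed algebraic closure $\bar K$. $f\in K[x]$ is separable of degree $2g+1$ with root set $\mathcal{R}\subset\bar K$. Discs: $D_{\alpha,b}=\{z\in\bar K:v(z-\alpha)\ge b\}$. A nonempty $\mathfrak{s}\subseteq\mathcal{R}$ is a cluster if $\mathfrak{s}=D\cap\mathcal{R}$ for some disc $D$; $d_+(\mathfrak{s})=\min_{a\ne a'\in\mathfrak{s}}v(a-a')$; for $\mathfrak{s}\ne\mathcal{R}$, the parent $\mathfrak{s}'$ is the smallest cluster properly containing $\mathfrak{s}$ and $d_-(\mathfrak{s})=d_+(\mathfrak{s}')$. For nonzero $h\in\bar K[z]$, $v(h)$ is the minimum valuation of its coefficients. A part-square decomposition of $h$ is $h=q^2+\rho$ with $\deg q\le\lceil\deg h/2\rceil$, and $t_{q,\rho}=v(\rho)-v(h)$. It is good if $t_{q,\rho}\ge2v(2)$ or no part-square decomposition $h=\tilde q^2+\tilde\rho$ has $t_{\tilde q,\tilde\rho}>t_{q,\rho}$. For a finite nonempty multiset $S\subset\bar K$ and disc $D=D_{\alpha,v(\beta)}$, $\mathfrak{t}^{S}(D)=\min\{t_{q,\rho},2v(2)\}$ where $h$ has root multiset $S$ and $h(\alpha+\beta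 z)=q^2+\rho$ is any good part-square decomposition (independent of choices). For an even-cardinality cluster $\mathfrak{s}$ and $\alpha\in\mathfrak{s}$, for $b\ge0$ set $\mathfrak{t}^{\mathfrak{s}}_+(b)=\mathfrak{t}^{\mathfrak{s}}(D_{\alpha,d_+(\mathfrak{s})-b})$, $\mathfrak{t}^{\mathfrak{s}}_-(b)=\mathfrak{t}^{\mathcal{R}\setminus\mathfrak{s}}(D_{\alpha,d_-(\mathfrak{s})+b})$, $b_0(\mathfrak{t}^{\mathfrak{s}}_\pm)$ the least $b\ge0$ at which $\mathfrak{t}^{\mathfrak{s}}_\pm$ equals $2v(2)$, and $B_{f,\mathfrak{s}}=b_0(\mathfrak{t}^{\mathfrak{s}}_+)+b_0(\mathfrak{t}^{\mathfrak{s}}_-)$. *)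

(* Defs.v *)
From HB Require Import structures.
From mathcomp Require Import all_boot all_order all_algebra all_field.
From mathcomp Require Import constructive_ereal.
Set Implicit Arguments. Unset Strict Implicit. Unset Printing Implicit Defensive.
Import Order.TTheory GRing.Theory Num.Theory.
Local Open Scope ring_scope.
Local Open Scope ereal_scope.

Section Defs.
Variable L : fieldType.
Variable v : L -> \bar rat.

Definition is_valuation :=
  [/\ forall x, (v x = +oo) <-> x = 0%R,
      forall x, v x != -oo,
      forall x y, v (x * y)%R = v x + v y &
      forall x y, Order.min (v x) (v y) <= v (x + y)%R].

Definition two_v2 : \bar rat := v 2%:R + v 2%:R.

Definition vpoly (h : {poly L}) : \bar rat :=
  \big[Order.min/+oo]_(i < size h) v h`_i.

Definition psd (h q rho : {poly L}) : Prop :=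
  h = (q ^+ 2 + rho)%R /\ ((size q).-1 <= uphalf (size h).-1)%N.

Definition tqr (h rho : {poly L}) : \bar rat := vpoly rho - vpoly h.

Definition good_psd (h q rho : {poly L}) : Prop :=
  psd h q rho /\
  (two_v2 <= tqr h rho \/
   forall q' rho', psd h q' rho' -> ~ (tqr h rho < tqr h rho')).

Definition polyS (S : seq L) : {poly L} := \prod_(a <- S) ('X - a%:P).

(* tS v S alpha beta x : x is t^S(D_{alpha, v(beta)}), computed from a good
   part-square decomposition of h(alpha + beta z). *)
Definition tS (S : seq L) (alpha beta : L) (x : \bar rat) : Prop :=
  let h := polyS S \Po (alpha%:P + beta *: 'X)%R in
  exists q rho, good_psd h q rho /\ x = Order.min (tqr h rho) two_v2.

Definition is_cluster (rs s : seq L) : Prop :=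
  s != [::] /\
  exists (alpha : L) (b : rat),
    forall x, (x \in s) = (x \in rs) && (b%:E <= v (x - alpha)%R).

Definition dplus (s : seq L) : \bar rat :=
  \big[Order.min/+oo]_(a <- s) \big[Order.min/+oo]_(a' <- s | a != a')
     v (a - a')%R.

Definition proper_sub (s c : seq L) : Prop :=
  {subset s <= c} /\ exists2 x, x \in c & x \notin s.

Definition is_parent (rs s s' : seq L) : Prop :=
  [/\ is_cluster rs s', proper_sub s s' &
      forall c, is_cluster rs c -> proper_sub s c -> {subset s' <= c}].

Definition tplus (s : seq L) (alpha : L) (b : rat) (x : \bar rat) : Prop :=
  exists beta, v beta = dplus s - b%:E /\ tS s alpha beta x.

(* t_-^s(b) = t^{R \ s}(D_{alpha, d_-(s) + b}), d_-(s) = d_+(parent) *)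
Definition tminus (rs s : seq L) (alpha : L) (b : rat) (x : \bar rat) : Prop :=
  exists s', is_parent rs s s' /\
  exists beta, v beta = dplus s' + b%:E /\
    tS [seq y <- rs | y \notin s] alpha beta x.

Definition is_b0 (T : rat -> \bar rat -> Prop) (b : rat) : Prop :=
  [/\ (0 <= b)%R, T b two_v2 &
      forall b', (0 <= b')%R -> (b' < b)%R -> ~ T b' two_v2].

End Defs.

Section KDefs.
Variables (K : fieldType) (L : fieldType) (iota : {rmorphism K -> L}).
Variable v : L -> \bar rat.

Definition algebraic_over :=
  forall x : L, exists2 p : {poly K}, p != 0%R & root (map_poly iota p) x.

Definition discrete_on_K :=
  exists2 c : rat, (0 < c)%R &
    (forall x : K, x != 0%R -> exists n : int, v (iota x) = (n%:~R * c)%R%:E)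
    /\ exists x : K, v (iota x) = c%:E.

Definition complete_on_K :=
  forall u : nat -> K,
    (forall M : rat, exists N, forall m n, (N <= m)%N -> (N <= n)%N ->
        M%:E <= v (iota (u m - u n)%R)) ->
    exists l : K, forall M : rat, exists N, forall n, (N <= n)%N ->
        M%:E <= v (iota (u n - l)%R).

(* the residue field O_K / m_K is algebraically closed: every monic
   polynomial of positive degree over the residue field (= reduction of a
   polynomial over O_K with unit leading coefficient) has a root *)
Definition residue_alg_closed :=
  forall p : {poly K}, (1 < size p)%N ->
    (forall i, 0 <= v (iota p`_i)) -> v (iota (lead_coef p)) = 0 ->
    exists x : K, 0 <= v (iota x) /\ 0 < v (iota p.[x]).

Definition residue_char2 := 0 < v (iota 2%:R).
End KDefs.

(* Main.v *)
Require Import Defs.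
From HB Require Import structures.
From mathcomp Require Import all_boot all_order all_algebra all_field.
From mathcomp Require Import constructive_ereal.
From mathcomp Require Import ring lra.
Import Order.TTheory GRing.Theory Num.Theory.
Local Open Scope ring_scope.
Local Open Scope ereal_scope.

Lemma bigmin_seq_le (I : eqType) (s : seq I) (P : pred I) (F : I -> \bar rat) x :
  x \in s -> P x -> \big[Order.min/+oo]_(i <- s | P i) F i <= F x.
Proof.
elim: s => // a s IH; rewrite inE big_cons => /orP[/eqP->|xs] Px.
  by rewrite Px ge_min lexx.
case: ifP => _; last exact: IH.
by rewrite ge_min IH // orbT.
Qed.

Lemma le_bigmin_seq (I : eqType) (s : seq I) (P : pred I) (F : I -> \bar rat) t :
  (forall i, i \in s -> P i -> t <= F i) -> t <= \big[Order.min/+oo]_(i <- s | P i) F i.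
Proof.
elim: s => [|a s IH] H; first by rewrite big_nil leey.
rewrite big_cons; have IH' : t <= \big[Order.min/+oo]_(i <- s | P i) F i.
  by apply: IH => i hi; apply: H; rewrite inE hi orbT.
case: ifP => // Pa; rewrite le_min IH' andbT; apply: H => //; by rewrite inE eqxx.
Qed.

Section Val.
Variable L : fieldType.
Variable v : L -> \bar rat.
Hypothesis hv : is_valuation v.

Lemma v0 : v 0 = +oo.
Proof. by case: hv => h _ _ _; apply/h. Qed.

Lemma vfin {x} : x != 0%R -> exists y : rat, v x = y%:E.
Proof.
case: hv => h hn _ _ xn0.
move: (hn x) (h x); case: (v x) => [y||] //; first by exists y.
by move=> _ [/(_ erefl) /eqP]; rewrite (negbTE xn0).
Qed.

Lemma vfin_neq0 {x y} : v x = y%:E -> x != 0%R.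
Proof. by move=> h; apply/eqP => x0; move: h; rewrite x0 v0. Qed.

Lemma vM x y : v (x * y) = v x + v y.
Proof. by case: hv. Qed.

Lemma vmin x y : Order.min (v x) (v y) <= v (x + y).
Proof. by case: hv. Qed.

Lemma v1 : v 1 = 0.
Proof.
have [y hy] := (@vfin 1%R (oner_neq0 L)).
have := vM 1 1; rewrite mulr1 hy -EFinD => /eqP; rewrite eqe => /eqP E.
by congr (_%:E); lra.
Qed.

Lemma vN1 : v (-1) = 0.
Proof.
have [y hy] : exists y, v (-1) = y%:E by apply: vfin; rewrite oppr_eq0 oner_neq0.
have := vM (-1) (-1); rewrite mulrNN mulr1 v1 hy -EFinD => /eqP; rewrite eqe => /eqP E.
by congr (_%:E); lra.
Qed.

Lemma vN x : v (- x) = v x.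
Proof. by rewrite -mulN1r vM vN1 add0e. Qed.

Lemma vB x y : v (x - y) = v (y - x).
Proof. by rewrite -vN opprB. Qed.

Lemma vD_ge t x y : t <= v x -> t <= v y -> t <= v (x + y).
Proof. move=> a b; apply: le_trans (vmin x y); by rewrite le_min a b. Qed.

Lemma vD_gt t x y : t < v x -> t < v y -> t < v (x + y).
Proof. move=> a b; apply: lt_le_trans (vmin x y); by rewrite lt_min a b. Qed.

Lemma vD_eq x y : v x < v y -> v (x + y) = v x.
Proof.
move=> lt; apply/eqP; rewrite eq_le; apply/andP; split; last first.
  by apply: vD_ge => //; apply: ltW.
rewrite leNgt; apply/negP => h.
have : v x < v ((x + y) + (- y)) by apply: vD_gt => //; rewrite vN.
by rewrite addrK ltxx.
Qed.

Lemma vinv x y : v x = y%:E -> v x^-1 = (- y)%:E.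
Proof.
move=> h; have x0 := vfin_neq0 h.
have [z hz] := vfin (invr_neq0 x0).
have := vM x x^-1; rewrite mulfV // v1 h hz -EFinD => /eqP; rewrite eqe => /eqP E.
by congr (_%:E); lra.
Qed.

Lemma vpoly_le (h : {poly L}) i : vpoly v h <= v h`_i.
Proof.
rewrite /vpoly; case: (ltnP i (size h)) => hi.
  by rewrite (bigD1 (Ordinal hi)) //= ge_min lexx.
by rewrite nth_default // v0 leey.
Qed.

Lemma vpoly_ge (h : {poly L}) t : (forall i, t <= v h`_i) -> t <= vpoly v h.
Proof.
move=> H; rewrite /vpoly; elim/big_ind: _ => //; first by rewrite leey.
by move=> x y a b; rewrite le_min a b.
Qed.

Lemma vpoly_eq (h : {poly L}) j t : v h`_j = t -> (forall i, t <= v h`_i) -> vpoly v h = t.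
Proof.
move=> hj H; apply/eqP; rewrite eq_le vpoly_ge // andbT -hj; exact: vpoly_le.
Qed.

Variable w : rat.
Hypothesis hw : v 2%:R = w%:E.
Hypothesis w0 : (0 < w)%R.

Lemma key m b c0 c1 c2 q0 q1 : (0 <= b)%R -> (b < w + w)%R ->
  (c0 = 0 \/ c2 = 0)%R -> m%:E <= v c0 -> m%:E <= v c2 -> v c1 = (m+b)%:E ->
  (m+b)%:E < v (c0 - q0^+2) -> (m+b)%:E < v (c1 - 2%:R*q0*q1) ->
  (m+b)%:E < v(c2 - q1^+2) -> False.
Proof.
move=> b0 bw.
wlog: c0 c2 q0 q1 / c2 = 0%R.
  move=> W [c00|c20] h0 h2 h1 r0 r1 r2; last first.
    exact: (W c0 c2 q0 q1 c20 (or_intror c20) h0 h2 h1 r0 r1 r2).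
  by apply: (W c2 c0 q1 q0 c00 (or_intror c00) h2 h0 h1 r2 _ r0); rewrite mulrAC.
move=> -> _ h0 _ h1 r0 r1 r2.
have t : (m + b)%:E < v (2%:R * q0 * q1).
  have [->|q0n] := eqVneq q0 0%R; first by rewrite mulr0 mul0r v0 ltey.
  have [->|q1n] := eqVneq q1 0%R; first by rewrite mulr0 v0 ltey.
  have [x0 hx0] := vfin q0n; have [x1 hx1] := vfin q1n.
  move: r2; rewrite sub0r vN expr2 vM hx1 -EFinD lte_fin => r2.
  have hq : m%:E <= v (q0 ^+ 2).
    have -> : (q0 ^+ 2 = c0 + - (c0 - q0 ^+ 2))%R by rewrite opprB addrC subrK.
    apply: vD_ge => //; rewrite vN; apply: ltW; apply: le_lt_trans r0.
    by rewrite lee_fin; lra.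
  move: hq; rewrite expr2 vM hx0 -EFinD lee_fin => hq.
  by rewrite !vM hw hx0 hx1 -!EFinD lte_fin; lra.
have : (m + b)%:E < v ((c1 - 2%:R * q0 * q1) + 2%:R * q0 * q1) by apply: vD_gt.
by rewrite subrK h1 ltxx.
Qed.


Definition quad (c0 c1 c2 : L) : {poly L} := (c0%:P + c1 *: 'X + c2 *: 'X^2)%R.

Lemma quad_coef c0 c1 c2 i : (quad c0 c1 c2)`_i = [:: c0; c1; c2]`_i.
Proof.
rewrite /quad !coefD coefC !coefZ coefX coefXn.
by case: i => [|[|[|i]]] /=; rewrite ?mulr0 ?mulr1 ?addr0 ?add0r // nth_nil.
Qed.

Lemma quad_Poly c0 c1 c2 : quad c0 c1 c2 = Poly [:: c0; c1; c2].
Proof. by apply/polyP => i; rewrite quad_coef coef_Poly. Qed.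

Lemma size_quad c0 c1 c2 : (size (quad c0 c1 c2) <= 3)%N.
Proof. by rewrite quad_Poly; apply: size_Poly. Qed.

Lemma size_gt (p : {poly L}) i : p`_i != 0%R -> (i < size p)%N.
Proof. by apply: contraR; rewrite -leqNgt => /(nth_default 0%R) ->. Qed.

Lemma quad_of (q : {poly L}) : (size q <= 3)%N -> q = quad q`_0 q`_1 q`_2.
Proof.
move=> sq; apply/polyP => i; rewrite quad_coef.
case: i => [|[|[|i]]] //=; rewrite nth_nil nth_default // (leq_trans sq) //.
Qed.

Lemma sq_quad (q : {poly L}) : (size q <= 2)%N ->
  (q ^+ 2 = quad (q`_0 ^+ 2) (2%:R * q`_0 * q`_1) (q`_1 ^+ 2))%R.
Proof.
move=> sq; have -> : q = quad q`_0 q`_1 0%R.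
  have h := quad_of q (leq_trans sq (leqnSn 2)).
  by rewrite {1}h [q`_2]nth_default.
rewrite !quad_coef /= /quad !scale0r addr0 -!mul_polyC !rmorphM ?rmorphXn /= ?rmorph_nat.
ring.
Qed.

Lemma two_v2E : two_v2 v = (w + w)%:E.
Proof. by rewrite /two_v2 hw EFinD. Qed.

Lemma ub (h : {poly L}) m b : (size h <= 3)%N -> vpoly v h = m%:E ->
  v h`_1 = (m + b)%:E -> (h`_0 = 0 \/ h`_2 = 0)%R -> (0 <= b)%R -> (b < w + w)%R ->
  forall q rho, psd h q rho -> ~ (two_v2 v <= tqr v h rho).
Proof.
move=> sh vh h1 h02 b0 bw q rho [hq sq] T.
have sq2 : (size q <= 2)%N.
  move: sq sh; case: (size h) => [|[|[|[|n]]]] //=; case: (size q) => [|[|[|k]]] //.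
have rhoE : rho = (h - q ^+ 2)%R by rewrite hq addrC addKr.
move: T; rewrite two_v2E /tqr vh leeBrDr // -EFinD => T.
have lt i : (m + b)%:E < v rho`_i.
  apply: lt_le_trans (vpoly_le _ _); apply: lt_le_trans T; rewrite lte_fin; lra.
have c i : rho`_i = (h`_i - (quad (q`_0 ^+ 2) (2%:R * q`_0 * q`_1) (q`_1 ^+ 2))`_i)%R.
  by rewrite rhoE -sq_quad // coefB.
apply: (@key m b h`_0 h`_1 h`_2 q`_0 q`_1 b0 bw h02 _ _ h1).
- by rewrite -vh vpoly_le.
- by rewrite -vh vpoly_le.
- by have := lt 0%N; rewrite c quad_coef.
- by have := lt 1%N; rewrite c quad_coef.
- by have := lt 2%N; rewrite c quad_coef.
Qed.

Lemma quadB a b c a' b' c' : (quad a b c - quad a' b' c' = quad (a - a') (b - b') (c - c'))%R.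
Proof.
apply/polyP => i; rewrite coefB !quad_coef.
by case: i => [|[|[|i]]] //=; rewrite !nth_nil subr0.
Qed.

Lemma sqP q0 q1 : ((Poly [:: q0; q1]) ^+ 2 = quad (q0 ^+ 2) (2%:R * q0 * q1) (q1 ^+ 2))%R.
Proof. by rewrite sq_quad ?size_Poly // !coef_Poly. Qed.

Lemma wit (h : {poly L}) q0 q1 M : (1 < size h)%N -> vpoly v h = M%:E ->
  vpoly v (h - (Poly [:: q0; q1]) ^+ 2)%R = (M + (w + w))%:E ->
  exists q rho, good_psd v h q rho /\ two_v2 v = Order.min (tqr v h rho) (two_v2 v).
Proof.
move=> sh vh vr; exists (Poly [:: q0; q1]), (h - (Poly [:: q0; q1]) ^+ 2)%R.
have tq : tqr v h (h - (Poly [:: q0; q1]) ^+ 2)%R = two_v2 v.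
  by rewrite /tqr vr vh two_v2E -EFinB; congr (_%:E); lra.
rewrite tq minxx; split => //; split; last by left; rewrite tq.
split; first by rewrite addrC subrK.
move: sh (size_Poly [:: q0; q1]); case: (size h) => [|[|n]] //.
by case: (size (Poly _)) => [|[|[|k]]].
Qed.
End Val.
Arguments quad {L}.
Arguments quad_coef {L}.
Arguments quad_Poly {L}.
Arguments size_quad {L}.
Arguments size_gt {L}.
Arguments sq_quad {L}.
Arguments quad_of {L}.
Arguments v0 {L v}.
Arguments vfin {L v} hv {x}.
Arguments vfin_neq0 {L v} hv {x y}.
Arguments vM {L v}.
Arguments vmin {L v}.
Arguments v1 {L v}.
Arguments vN1 {L v}.
Arguments vN {L v}.
Arguments vB {L v}.
Arguments vD_ge {L v}.
Arguments vD_gt {L v}.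
Arguments vD_eq {L v}.
Arguments vinv {L v} hv {x y}.
Arguments vpoly_le {L v}.
Arguments vpoly_ge {L v}.
Arguments vpoly_eq {L v}.
Arguments key {L v} hv {w} hw.
Arguments two_v2E {L v w} hw.
Arguments ub {L v} hv {w} hw.
Arguments quadB {L}.
Arguments sqP {L}.
Arguments wit {L v w} hw.

Lemma dplus_eq (L : fieldType) (v : L -> \bar rat) (t : seq L) x y m :
  x \in t -> y \in t -> x != y -> v (x - y)%R = m ->
  (forall a a', a \in t -> a' \in t -> a != a' -> m <= v (a - a')%R) -> dplus v t = m.
Proof.
move=> xt yt xy hm H; apply/eqP; rewrite eq_le; apply/andP; split.
  rewrite /dplus; apply: le_trans (@bigmin_seq_le _ t xpredT _ x xt erefl) _.
  by rewrite -hm; apply: bigmin_seq_le.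
apply: le_bigmin_seq => a ha _; apply: le_bigmin_seq => a' ha' aa'.
exact: H.
Qed.

Lemma cluster_sub (L : fieldType) (v : L -> \bar rat) rs t :
  is_cluster v rs t -> {subset t <= rs}.
Proof. by case=> _ [c [b h]] x; rewrite h => /andP[]. Qed.
Arguments cluster_sub {L v rs t}.

Lemma vpoly_quad (L : fieldType) (v : L -> \bar rat) (hv : is_valuation v) c0 c1 c2 t :
  (v c0 = t \/ v c1 = t \/ v c2 = t) -> t <= v c0 -> t <= v c1 -> t <= v c2 ->
  vpoly v (quad c0 c1 c2) = t.
Proof.
move=> H h0 h1 h2.
have G : forall i, t <= v (quad c0 c1 c2)`_i.
  move=> i; rewrite quad_coef; case: i => [|[|[|i]]] //=.
  by rewrite nth_nil (v0 hv) leey.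
case: H => [H|[H|H]].
- by apply: (@vpoly_eq _ _ hv _ 0%N); rewrite // quad_coef.
- by apply: (@vpoly_eq _ _ hv _ 1%N); rewrite // quad_coef.
- by apply: (@vpoly_eq _ _ hv _ 2%N); rewrite // quad_coef.
Qed.

Theorem corollary1p3
  (K : fieldType) (L : closedFieldType) (iota : {rmorphism K -> L})
  (v : L -> \bar rat)
  (charK0 : [pchar K] =i pred0)
  (hv : is_valuation v)
  (halg : algebraic_over iota)
  (hdisc : discrete_on_K iota v)
  (hcompl : complete_on_K iota v)
  (hres2 : residue_char2 iota v)
  (hresac : residue_alg_closed iota v)
  (f : {poly K}) (hdeg : size f = 4%N) (hsep : separable_poly f)
  (rs : seq L) (hrs_uniq : uniq rs)
  (hrs : forall x, (x \in rs) = root (map_poly iota f) x)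
  (s : seq L) (hs_cl : is_cluster v rs s) (hs_uniq : uniq s)
  (hs_size : size s = 2%N)
  (alpha : L) (halpha : alpha \in s) :
  exists bp bm : rat,
    [/\ is_b0 v (tplus v s alpha) bp,
        is_b0 v (tminus v rs s alpha) bm &
        (bp + bm)%R%:E = two_v2 v + two_v2 v].
Proof.
have two0K : (2%:R : K) != 0%R by have := charK0 2%N; rewrite !inE /= => ->.
have two0 : (2%:R : L) != 0%R by rewrite -(rmorph_nat iota) fmorph_eq0.
have [w hw] := vfin hv two0.
have w0 : (0 < w)%R by move: hres2; rewrite /residue_char2 rmorph_nat hw lte_fin.
have t2E := two_v2E hw.
have srs : {subset s <= rs} by apply: cluster_sub hs_cl.
case: hs_cl => _ [c [b0 hmem]].
have [a' [ha'ne ha's hperm]] :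
    exists a', [/\ a' != alpha, a' \in s & perm_eq s [:: alpha; a']].
  move: hs_size hs_uniq halpha; case: (s) => [|x [|y [|z t]]] //= _.
  rewrite !inE andbT => xy /orP[/eqP->|/eqP->].
    exists y; split; [by rewrite eq_sym | by rewrite !inE eqxx orbT | exact: perm_refl].
  exists x; split; [by [] | by rewrite !inE eqxx | ].
  apply: uniq_perm; first by rewrite /= inE xy.
    by rewrite /= inE eq_sym xy.
  by move=> u; rewrite !inE orbC.
set p := map_poly iota f.
have [r hr] := closed_field_poly_normal p.
have sp : size p = 4%N by rewrite size_map_poly.
have p0 : p != 0%R by rewrite -size_poly_eq0 sp.
have lc0 : lead_coef p != 0%R by rewrite lead_coef_eq0.
have sr : size r = 3%N.
  by have := sp; rewrite hr size_scale // size_prod_XsubC => -[].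
have ur : uniq r.
  rewrite -separable_prod_XsubC -(eqp_separable (eqp_scale _ lc0)) -hr.
  by rewrite separable_map.
have mr : forall x, (x \in rs) = (x \in r).
  by move=> x; rewrite hrs -/p hr rootZ // root_prod_XsubC.
have [r0 r0r r0s] : exists2 r0, r0 \in r & r0 \notin s.
  case: (boolP (all (mem s) r)) => [/allP sub | /allPn [x xr xs]]; last by exists x.
  by have := uniq_leq_size ur sub; rewrite sr hs_size.
have r0rs : r0 \in rs by rewrite mr.
have ars : alpha \in rs by apply: srs.
have a'rs : a' \in rs by apply: srs.
have ar0 : alpha != r0 by apply: contraNneq r0s => <-.
have a'r0 : a' != r0 by apply: contraNneq r0s => <-.
have rsE : forall x, x \in rs -> [|| x == alpha, x == a' | x == r0].
  move=> x xrs; apply/negPn/negP => H.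
  have U : uniq [:: alpha; a'; r0; x].
    move: H; rewrite /= !inE !negb_or => /and3P[h1 h2 h3].
    by rewrite eq_sym ha'ne ar0 a'r0 /= eq_sym h1 eq_sym h2 eq_sym h3.
  have sub : {subset [:: alpha; a'; r0; x] <= r}.
    by move=> u; rewrite !inE => /or4P[] /eqP->; rewrite -?mr.
  by have := uniq_leq_size U sub; rewrite sr.
have onlyr0 : forall z, z \in rs -> z \notin s -> z = r0.
  move=> z /rsE /or3P[] /eqP -> //.
    by rewrite halpha.
  by rewrite ha's.
have hac : b0%:E <= v (alpha - c)%R by move: halpha; rewrite hmem => /andP[].
have ha'c : b0%:E <= v (a' - c)%R by move: ha's; rewrite hmem => /andP[].
have hr0c : v (r0 - c)%R < b0%:E.
  by move: r0s; rewrite hmem r0rs /= -ltNge.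
have [E hE] : exists E, v (r0 - c)%R = E%:E.
  apply: (vfin hv); apply: contraTneq hr0c => ->; by rewrite v0 // leNgt ltey.
have Eb0 : (E < b0)%R by rewrite -lte_fin -hE.
have vdiff : forall y, b0%:E <= v (y - c)%R -> v (y - r0)%R = E%:E.
  move=> y hy; have -> : (y - r0 = - (r0 - c) + (y - c))%R.
    by ring.
  by rewrite vD_eq // vN // hE; apply: lt_le_trans hy; rewrite lte_fin.
have var0 := vdiff _ hac.
have va'r0 := vdiff _ ha'c.
have vaa' : b0%:E <= v (alpha - a')%R.
  have -> : (alpha - a' = (alpha - c) + - (a' - c))%R by ring.
  by apply: vD_ge => //; rewrite vN.
have [Dr hD] : exists Dr, v (alpha - a')%R = Dr%:E.
  by apply: (vfin hv); rewrite subr_eq0 eq_sym.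
have EDr : (E < Dr)%R by rewrite -lte_fin -hD; apply: lt_le_trans vaa'; rewrite lte_fin.
have mems : forall x, (x \in s) = (x \in [:: alpha; a']) by apply: perm_mem.
have dps : dplus v s = Dr%:E.
  apply: (@dplus_eq _ _ _ alpha a') => //; first by rewrite eq_sym.
  move=> x y; rewrite !mems !inE => /orP[]/eqP-> /orP[]/eqP->; rewrite ?eqxx //.
    by rewrite hD.
  by rewrite vB // hD.
have dpr : forall t, alpha \in t -> r0 \in t -> {subset t <= rs} -> dplus v t = E%:E.
  move=> t at0 r0t sub; apply: (@dplus_eq _ _ _ alpha r0) => //.
  have vge : forall x y, x \in rs -> y \in rs -> x != y -> E%:E <= v (x - y)%R.
    move=> x y /rsE /or3P[]/eqP-> /rsE /or3P[]/eqP->; rewrite ?eqxx // => _;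
    rewrite ?var0 ?va'r0 ?(vB hv r0) ?var0 ?va'r0 //;
    rewrite ?hD ?(vB hv a') ?hD ?lee_fin ?ltW //.
  by move=> x y xt yt; apply: vge; apply: sub.
have pS : polyS s = (('X - alpha%:P) * ('X - a'%:P))%R.
  by rewrite /polyS (perm_big _ hperm) !big_cons big_nil /= mulr1.
have hplus : forall beta, (polyS s \Po (alpha%:P + beta *: 'X))%R
    = quad 0%R (beta * (alpha - a'))%R (beta ^+ 2)%R.
  move=> beta; rewrite pS comp_polyM !comp_polyB comp_polyX !comp_polyC /quad ?polyC0.
  rewrite -!mul_polyC !rmorphM !rmorphB /= ?rmorphXn /=.
  ring.
have rsf : perm_eq [seq y <- rs | y \notin s] [:: r0].
  apply: uniq_perm => //; first exact: filter_uniq.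
  move=> x; rewrite mem_filter !inE.
  case: (eqVneq x r0) => [->|xr0]; first by rewrite r0s r0rs.
  apply/negbTE/andP => -[xs xrs]; by move: xr0; rewrite (onlyr0 x xrs xs) eqxx.
have pR : polyS [seq y <- rs | y \notin s] = ('X - r0%:P)%R.
  by rewrite /polyS (perm_big _ rsf) big_cons big_nil /= mulr1.
have hminus : forall beta, (polyS [seq y <- rs | y \notin s] \Po (alpha%:P + beta *: 'X))%R
    = quad (alpha - r0)%R beta 0%R.
  move=> beta; rewrite pR comp_polyB comp_polyX !comp_polyC /quad ?polyC0.
  rewrite scale0r addr0 -!mul_polyC !rmorphB /=.
  ring.
have two2 : ((2%:R * 2%:R)%R : L) != 0%R by rewrite mulf_neq0.
have v4 : v (2%:R * 2%:R)%R = (w + w)%:E by rewrite vM // hw -EFinD.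
have vi4 := vinv hv v4.
have hw2 : (0 <= w + w)%R by lra.
have i2 := vinv hv hw.
exists (w + w)%R, (w + w)%R; split; last by rewrite t2E -EFinD.
- split => //.
  + set beta := ((alpha - a') * (2%:R * 2%:R)^-1)%R.
    have vb : v beta = (Dr - (w + w))%:E by rewrite vM // hD vi4 -EFinD.
    have b0' : beta != 0%R by apply: (vfin_neq0 hv vb).
    exists beta; split; first by rewrite vb dps -EFinB.
    rewrite /tS; cbv zeta; rewrite hplus.
    set x := ((alpha - a') * 2%:R^-1)%R.
    have vx : v x = (Dr - w)%:E by rewrite vM // hD i2 -EFinD.
    apply: (@wit _ _ _ hw _ x beta (Dr - (w + w) + (Dr - (w + w)))%R).
    * apply: (size_gt _ 1%N); rewrite quad_coef /= mulf_neq0 //.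
      by rewrite subr_eq0 eq_sym.
    * have vb2 : v (beta ^+ 2)%R = (Dr - (w + w) + (Dr - (w + w)))%:E.
        by rewrite expr2 vM // vb -EFinD.
      apply: vpoly_quad => //; first by right; right.
      - by rewrite v0 // leey.
      - by rewrite vM // vb hD -EFinD lee_fin; lra.
      - by rewrite vb2.
    * rewrite sqP quadB.
      have -> : (beta * (alpha - a') - 2%:R * x * beta = 0)%R.
        rewrite /x /beta; field.
        by rewrite two0 andbT; move: two2; rewrite -natrM.
      rewrite subrr sub0r.
      have vx2 : v (- x ^+ 2)%R = (Dr - (w + w) + (Dr - (w + w)) + (w + w))%:E.
        by rewrite vN // expr2 vM // vx -EFinD; congr (_%:E); lra.
      apply: vpoly_quad => //; first by left.
      - by rewrite vx2.
      - by rewrite v0 // leey.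
      - by rewrite v0 // leey.
  + move=> b' hb' hlt [beta [hbeta]].
    rewrite /tS; cbv zeta; rewrite hplus => -[q [rho [[hpsd _] hx]]].
    have T : two_v2 v <= tqr v (quad 0%R (beta * (alpha - a'))%R (beta ^+ 2)%R) rho.
      by rewrite {1}hx ge_min lexx.
    move: hbeta; rewrite dps -EFinB => vb.
    apply: (@ub _ _ hv _ hw _ (Dr - b' + (Dr - b'))%R b' _ _ _ _ hb' hlt _ _ hpsd T).
    * exact: size_quad.
    * have vb2 : v (beta ^+ 2)%R = (Dr - b' + (Dr - b'))%:E.
        by rewrite expr2 vM // vb -EFinD.
      apply: vpoly_quad => //; first by right; right.
      - by rewrite v0 // leey.
      - by rewrite vM // vb hD -EFinD lee_fin; lra.
      - by rewrite vb2.
    * by rewrite quad_coef /= vM // vb hD -EFinD; congr (_%:E); lra.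
    * by left; rewrite quad_coef.
- split => //.
  + exists rs; split.
      split.
      * split; first by apply/eqP => e; move: ars; rewrite e.
        exists alpha, E => x; case xrs: (x \in rs) => //=; apply/esym.
        case/or3P: (rsE x xrs) => /eqP->.
        - by rewrite subrr v0 // leey.
        - rewrite vB //; apply: le_trans vaa'; rewrite lee_fin; lra.
        - by rewrite vB // var0 lexx.
      * by split; [exact: srs | exists r0].
      * move=> c' cl [sub [z zc zs]] x xrs.
        have zr := onlyr0 z (cluster_sub cl z zc) zs.
        case/or3P: (rsE x xrs) => /eqP->; [exact: sub | exact: sub | by rewrite -zr].
    set beta := ((2%:R * 2%:R) * (alpha - r0))%R.
    have vb : v beta = (E + (w + w))%:E by rewrite vM // v4 var0 -EFinD addrC.
    have b0' : beta != 0%R by apply: (vfin_neq0 hv vb).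
    exists beta; split; first by rewrite vb (dpr rs ars r0rs (fun _ h => h)) EFinD.
    rewrite /tS; cbv zeta; rewrite hminus.
    have [s0 hs0] : exists s0, (s0 ^+ 2 = alpha - r0)%R.
      have : size ('X^2 - (alpha - r0)%:P : {poly L})%R != 1%N by rewrite size_XnsubC.
      case/closed_rootP => s0; rewrite rootE !hornerE subr_eq0 => /eqP h.
      by exists s0.
    apply: (@wit _ _ _ hw _ s0 (2%:R * s0)%R E).
    * by apply: (size_gt _ 1%N); rewrite quad_coef.
    * apply: vpoly_quad => //; first by left.
      - by rewrite var0.
      - by rewrite vb lee_fin; lra.
      - by rewrite v0 // leey.
    * rewrite sqP quadB.
      have -> : (alpha - r0 - s0 ^+ 2 = 0)%R by rewrite hs0 subrr.
      have -> : (beta - 2%:R * s0 * (2%:R * s0) = 0)%R by rewrite /beta -hs0; ring.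
      have -> : (0 - (2%:R * s0) ^+ 2 = - beta)%R by rewrite /beta -hs0; ring.
      apply: vpoly_quad => //; first by right; right; rewrite vN // vb.
      - by rewrite v0 // leey.
      - by rewrite v0 // leey.
      - by rewrite vN // vb.
  + move=> b' hb' hlt [s' [hpar [beta [hbeta]]]].
    rewrite /tS; cbv zeta; rewrite hminus => -[q [rho [[hpsd _] hx]]].
    have T : two_v2 v <= tqr v (quad (alpha - r0)%R beta 0%R) rho.
      by rewrite {1}hx ge_min lexx.
    case: hpar => cl [sub [z zs' zs]] _.
    have s'rs := cluster_sub cl.
    have zr := onlyr0 z (s'rs z zs') zs.
    have dps' : dplus v s' = E%:E by apply: dpr => //; [exact: sub | rewrite -zr].
    move: hbeta; rewrite dps' -EFinD => vb.
    apply: (@ub _ _ hv _ hw _ E b' _ _ _ _ hb' hlt _ _ hpsd T).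
    * exact: size_quad.
    * apply: vpoly_quad => //; first by left.
      - by rewrite var0.
      - by rewrite vb lee_fin; lra.
      - by rewrite v0 // leey.
    * by rewrite quad_coef /= vb.
    * by right; rewrite quad_coef.
Qed.
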